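(* Let $(\Omega,P)$ be a 2-class attributed random graph model and let $y(x)=(\phi'_G\circ\sigma\circ\phi_G)[X](i)$ be any generalized two-layer GCN without bias on $\Omega$ (with $\phi,\phi'$ linear un-biased aggregators, $\phi'$ mapping into $\mathbb{R}$, $\sigma$ the ReLU). Assume the relevant costs are finite. If $\Omega$ is class-symmetric about the origin, then $$C(L[y])\le C(y).$$ Furthermore, if $\Omega$ is symmetric about a subspace $S\subseteq\mathbb{R}^{m_{\mathrm{feat}}}$, then $$C(P_S[L[y]])\le C(L[y]).$$
   Context: A 2-class attributed random graph model is a probability space $(\Omega,P)$ of tuples $x=(G,i,v,X)$ where $G$ is a graph, $i$ is a node of $G$, $v:V(G)\to\{-1,1\}$ assigns classes and $X:V(G)\to\mathbb{R}^{m_{\mathrm{feat}}}$ assigns feature vectors; write $v(x)=v(i)$. Negation: $-x=(G,i,-v,-X)$ and $-F=\{-x:x\in F\}$. $\Omega$ is class-symmetric about the origin if $P(F)=P(-F)$ for all measurable $F\subseteq\Omega$. For a subspace $S\subseteq\mathbb{R}^{m_{\mathrm{feat}}}$, let $P_S$ be orthogonal projection onto $S$, $P_\perp=I-P_S$, and $R_S=P_S-P_\perp$ reflection across $S$; set $R_S(x)=(G,i,v,R_S\circ X)$ and $R_S(F)=\{R_S(x):x\in F\}$. $\Omega$ is symmetric about $S$ if $P(R_S(F))=P(F)$ for all measurable $F$. A model $y$ assigns a real number $y(x)$ to each $x\in\Omega$; its cost is $C(y)=\mathbb{E}_{x\sim\Omega}[-\log P(v(x):y(x))]$, where $P(v(x):y(x))=\sigma_s(y(x))$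 if $v(x)=1$ and $1-\sigma_s(y(x))$ if $v(x)=-1$, with $\sigma_s(z)=1/(1+e^{-z})$. A graph aggregation $\phi$ maps $(G,X)$ to new features $X':V(G)\to\mathbb{R}^l$; $\phi_G=\phi(G,\cdot)$; it is linear un-biased if $\phi_G(X_1+X_2)=\phi_G(X_1)+\phi_G(X_2)$ for all $G,X_1,X_2$ (and consequently commutes with scalar multiplication by $-1$, as used). A generalized two-layer GCN without bias is $y(x)=(\phi'_G\circ\sigma\circ\phi_G)[X](i)$ with $\sigma$ the ReLU applied entrywise. Its linear approximation is $L[y](x)=\tfrac12(\phi'_G\circ\phi_G)[X](i)$, and the projection of this onto $S$ is $P_S[L[y]](x)=\tfrac12(\phi'_G\circ\phi_G\circ P_S)[X](i)$. *)

(* Defs.v *)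
From HB Require Import structures.
From mathcomp Require Import all_boot all_order all_algebra.
From mathcomp Require Import all_classical all_reals all_analysis.
Set Implicit Arguments. Unset Strict Implicit. Unset Printing Implicit Defensive.
Import Order.TTheory GRing.Theory Num.Theory.
Local Open Scope ring_scope.
Local Open Scope classical_set_scope.

(* A sample x = (G, i, v, X) of a 2-class attributed random graph model.
   G is a (directed, possibly with loops: arbitrary) graph on the vertex set
   'I_n given by its adjacency relation; i is a node; v assigns classes in
   {-1,1} (encoded as bool: true = +1, false = -1); X assigns feature vectors
   in R^m (row vectors). *)
Record sample (R : realType) (m : nat) := Sample {
  s_n : nat;
  s_adj : rel 'I_s_n;
  s_node : 'I_s_n;
  s_cls : 'I_s_n -> bool;
  s_feat : 'I_s_n -> 'rV[R]_m }.

Arguments s_n {R m}.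
Arguments s_adj {R m}.
Arguments s_node {R m}.
Arguments s_cls {R m}.
Arguments s_feat {R m}.

Section SampleInstances.
Variables (R : realType) (m : nat).
HB.instance Definition _ := gen_eqMixin (sample R m).
HB.instance Definition _ := gen_choiceMixin (sample R m).
HB.instance Definition _ := isPointed.Build (sample R m)
  (@Sample R m 1 (fun _ _ => false) ord0 (fun _ => true) (fun _ => 0)).
End SampleInstances.

Definition cls_val (R : realType) (m : nat) (x : sample R m) : bool :=
  s_cls x (s_node x).

Definition neg_sample (R : realType) (m : nat) (x : sample R m) : sample R m :=
  @Sample R m (s_n x) (s_adj x) (s_node x)
    (fun j => ~~ s_cls x j) (fun j => - s_feat x j).

Definition neg_set (R : realType) (m : nat) (F : set (sample R m)) :=
  [set neg_sample x | x in F].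

(* orthogonal projection: Pm is the (right-multiplication) matrix of the
   orthogonal projection of R^m onto the row space S *)
Definition is_orth_proj (R : realType) (m : nat) (S Pm : 'M[R]_m) : Prop :=
  forall u : 'rV[R]_m,
    (u *m Pm <= S)%MS /\
    forall w : 'rV[R]_m, (w <= S)%MS -> (u - u *m Pm) *m w^T = 0.

(* reflection R_S = P_S - P_perp = 2 P_S - I, acting on features *)
Definition refl_sample (R : realType) (m : nat) (Pm : 'M[R]_m)
  (x : sample R m) : sample R m :=
  @Sample R m (s_n x) (s_adj x) (s_node x) (s_cls x)
    (fun j => s_feat x j *m (Pm - (1%:M - Pm))).

Definition refl_set (R : realType) (m : nat) (Pm : 'M[R]_m)
  (F : set (sample R m)) := [set refl_sample Pm x | x in F].

Definition aggregation (R : realType) (m l : nat) :=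
  forall n : nat, rel 'I_n -> ('I_n -> 'rV[R]_m) -> ('I_n -> 'rV[R]_l).

Definition aggregation_R (R : realType) (l : nat) :=
  forall n : nat, rel 'I_n -> ('I_n -> 'rV[R]_l) -> ('I_n -> R).

Definition lin_unbiased (R : realType) (m l : nat) (phi : aggregation R m l) :=
  forall n (G : rel 'I_n) (X1 X2 : 'I_n -> 'rV[R]_m) (j : 'I_n),
    phi n G (fun k => X1 k + X2 k) j = phi n G X1 j + phi n G X2 j.

Definition lin_unbiased_R (R : realType) (l : nat) (phi : aggregation_R R l) :=
  forall n (G : rel 'I_n) (X1 X2 : 'I_n -> 'rV[R]_l) (j : 'I_n),
    phi n G (fun k => X1 k + X2 k) j = phi n G X1 j + phi n G X2 j.

Definition relu (R : realType) (l : nat) (u : 'rV[R]_l) : 'rV[R]_l :=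
  map_mx (fun z => Num.max z 0) u.

Definition gcn2 (R : realType) (m l : nat) (phi : aggregation R m l)
  (phi' : aggregation_R R l) (x : sample R m) : R :=
  phi' (s_n x) (s_adj x)
    (fun j => relu (phi (s_n x) (s_adj x) (s_feat x) j)) (s_node x).

Definition gcn2_lin (R : realType) (m l : nat) (phi : aggregation R m l)
  (phi' : aggregation_R R l) (x : sample R m) : R :=
  2^-1 * phi' (s_n x) (s_adj x) (phi (s_n x) (s_adj x) (s_feat x)) (s_node x).

Definition gcn2_lin_proj (R : realType) (m l : nat) (Pm : 'M[R]_m)
  (phi : aggregation R m l) (phi' : aggregation_R R l) (x : sample R m) : R :=
  2^-1 * phi' (s_n x) (s_adj x)
    (phi (s_n x) (s_adj x) (fun j => s_feat x j *m Pm)) (s_node x).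

Definition sigmoid (R : realType) (z : R) : R := (1 + expR (- z))^-1.

Definition prob_cls (R : realType) (b : bool) (z : R) : R :=
  if b then sigmoid z else 1 - sigmoid z.

Definition cost_fun (R : realType) (m : nat) (y : sample R m -> R)
  (x : sample R m) : \bar R :=
  (- ln (prob_cls (cls_val x) (y x)))%:E.

Definition cost (R : realType) (m : nat) (G : set (set (sample R m)))
  (P : probability (g_sigma_algebraType G) R) (y : sample R m -> R) : \bar R :=
  (\int[P]_x cost_fun y x)%E.

Definition class_symmetric (R : realType) (m : nat) (G : set (set (sample R m)))
  (P : probability (g_sigma_algebraType G) R) : Prop :=
  forall F : set (g_sigma_algebraType G), measurable F ->
    measurable (neg_set F : set (g_sigma_algebraType G)) /\ P (neg_set F) = P F.

Definition symmetric_about (R : realType) (m : nat) (G : set (set (sample R m)))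
  (P : probability (g_sigma_algebraType G) R) (Pm : 'M[R]_m) : Prop :=
  forall F : set (g_sigma_algebraType G), measurable F ->
    measurable (refl_set Pm F : set (g_sigma_algebraType G)) /\
    P (refl_set Pm F) = P F.

(* "the cost of model y is finite" (integrand measurable and integrable) *)
Definition finite_cost (R : realType) (m : nat) (G : set (set (sample R m)))
  (P : probability (g_sigma_algebraType G) R) (y : sample R m -> R) : Prop :=
  P.-integrable [set: g_sigma_algebraType G] (cost_fun y).

(* Main.v *)
Require Import Defs.
From HB Require Import structures.
From mathcomp Require Import all_boot all_order all_algebra.
From mathcomp Require Import all_classical all_reals all_analysis.
From mathcomp Require Import measurable_realfun.
Import Order.TTheory GRing.Theory Num.Theory.
Local Open Scope ring_scope.
Local Open Scope classical_set_scope.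

Lemma transfer (R : realType) (m : nat)
  (G : set (set (sample R m))) (P : probability (g_sigma_algebraType G) R)
  (T : sample R m -> sample R m)
  (invol : forall x, T (T x) = x)
  (Hsym : forall F : set (g_sigma_algebraType G), measurable F ->
     measurable (T @` F : set (g_sigma_algebraType G)) /\ P (T @` F) = P F)
  (f : sample R m -> \bar R) (Hf : P.-integrable [set: g_sigma_algebraType G] f)
  (f0 : forall x, (0 <= f x)%E) :
  (\int[P]_x f (T x) = \int[P]_x f x)%E.
Proof.
have mf := measurable_int _ Hf.
have pre : forall F, T @^-1` F = T @` F.
  move=> F; apply/seteqP; split=> x /=.
    by move=> Fx; exists (T x) => //.
  by case=> y Fy <-; rewrite invol.
have mT : measurable_fun [set: g_sigma_algebraType G] (T : g_sigma_algebraType G -> g_sigma_algebraType G).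
  by move=> _ Y mY; rewrite setTI pre; case: (Hsym _ mY).
symmetry.
rewrite (@eq_measure_integral _ _ _ _ (@pushforward _ _ (g_sigma_algebraType G) (g_sigma_algebraType G) R P T)); last first.
  move=> A mA _; have [_ h] := Hsym _ mA; exact: (etrans (esym h) (f_equal P (esym (pre A)))).
by rewrite ge0_integral_pushforward // preimage_setT.
Qed.

Lemma avg_bound (R : realType) (m : nat)
  (G : set (set (sample R m))) (P : probability (g_sigma_algebraType G) R)
  (T : sample R m -> sample R m)
  (invol : forall x, T (T x) = x)
  (Hsym : forall F : set (g_sigma_algebraType G), measurable F ->
     measurable (T @` F : set (g_sigma_algebraType G)) /\ P (T @` F) = P F)
  (f g : sample R m -> \bar R) (Hf : P.-integrable [set: g_sigma_algebraType G] f)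
  (Hg : P.-integrable [set: g_sigma_algebraType G] g)
  (f0 : forall x, (0 <= f x)%E) (g0 : forall x, (0 <= g x)%E)
  (Hle : forall x, (g x <= (2^-1)%:E * (f x + f (T x)))%E) :
  (\int[P]_x g x <= \int[P]_x f x)%E.
Proof.
have mf := measurable_int _ Hf.
have mg := measurable_int _ Hg.
have pre : forall F, T @^-1` F = T @` F.
  move=> F; apply/seteqP; split=> x /=.
    by move=> Fx; exists (T x) => //.
  by case=> y Fy <-; rewrite invol.
have mT : measurable_fun [set: g_sigma_algebraType G] (T : g_sigma_algebraType G -> g_sigma_algebraType G).
  by move=> _ Y mY; rewrite setTI pre; case: (Hsym _ mY).
have mfT := measurableT_comp mf mT.
apply: (@le_trans _ _ (\int[P]_x ((2^-1)%:E * (f x + f (T x))))%E).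
  apply: ge0_le_integral => //.
  apply: measurable_funeM; exact: emeasurable_funD.
rewrite ge0_integralZl_EFin //; last 2 first.
- by move=> x _; rewrite adde_ge0.
- exact: emeasurable_funD.
rewrite ge0_integralD //; try by move=> x _; exact: f0.
rewrite (@transfer _ _ _ P T invol Hsym f Hf f0).
have I0 : (0 <= (\int[P]_x f x)%E)%E by apply: integral_ge0 => x _; exact: f0.
move: I0; case: (\int[P]_x f x)%E => [r| |] //= r0.
  rewrite -EFinD -EFinM lee_fin. 
  by rewrite mulrDr (mulrC 2^-1) -splitr.
exact: leey.
Qed.

Lemma sp_mid (R : realType) (a b : R) :
  ln (1 + expR (a + b)) *+ 2 <= ln (1 + expR (a * 2)) + ln (1 + expR (b * 2)).
Proof.
have ea := expR_gt0 a; have eb := expR_gt0 b.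
rewrite expRD !(mulrC _ 2) !(expRM_natl 2).
have p1 : 0 < 1 + expR a * expR b by rewrite addr_gt0 // mulr_gt0.
have p2 : 0 < 1 + expR a ^+ 2 by rewrite addr_gt0 // exprn_gt0.
have p3 : 0 < 1 + expR b ^+ 2 by rewrite addr_gt0 // exprn_gt0.
rewrite -lnXn // -lnM ?posrE // ler_ln ?posrE ?exprn_gt0 ?mulr_gt0 //.
set s := expR a; set t := expR b.
have : 0 <= (s - t) ^+ 2 by rewrite sqr_ge0.
rewrite sqrrB => h.
rewrite sqrrD expr1n mul1r.
have -> : (1 + s ^+ 2) * (1 + t ^+ 2) = 1 + (s ^+ 2 + t ^+ 2) + (s * t) ^+ 2.
  rewrite mulrDl !mul1r mulrDr mulr1 exprMn !addrA; congr (_ + _).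
  by rewrite addrAC.
rewrite lerD2r lerD2l -subr_ge0.
by rewrite addrAC.
Qed.

Lemma cf_eq (R : realType) (b : bool) (z : R) :
  - ln (prob_cls b z) = ln (1 + expR (if b then - z else z)).
Proof.
have ez := expR_gt0 z; have enz := expR_gt0 (- z).
rewrite /prob_cls /sigmoid; case: b.
  by rewrite lnV ?opprK // posrE addr_gt0.
have -> : 1 - (1 + expR (- z))^-1 = (1 + expR z)^-1.
  rewrite expRN.
  have e0 : expR z != 0 by rewrite gt_eqF.
  have d0 : 1 + expR z != 0 by rewrite gt_eqF // addr_gt0.
  have -> : 1 + (expR z)^-1 = (1 + expR z) / expR z.
    by rewrite mulrDl mul1r mulfV // addrC.
  rewrite invf_div.
  apply: (mulfI d0); rewrite mulrBr mulr1 mulrC mulfVK // mulfV //.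
  by rewrite addrK.
by rewrite lnV ?opprK // posrE addr_gt0.
Qed.

Lemma cf_ge0 (R : realType) (b : bool) (z : R) : 0 <= - ln (prob_cls b z).
Proof. by rewrite cf_eq ln_ge0 // lerDl expR_ge0. Qed.

Lemma cf_neg (R : realType) (b : bool) (z : R) :
  - ln (prob_cls (~~ b) (- z)) = - ln (prob_cls b z).
Proof. by rewrite !cf_eq; case: b => //=; rewrite opprK. Qed.

Lemma cf_mid (R : realType) (b : bool) (z1 z2 : R) :
  - ln (prob_cls b (2^-1 * (z1 + z2))) <=
  2^-1 * (- ln (prob_cls b z1) + - ln (prob_cls b z2)).
Proof.
have h2 : forall w : R, 2^-1 * w * 2 = w.
  by move=> w; rewrite mulrAC mulVf ?mul1r // pnatr_eq0.
have two0 : (2 : R) != 0 by rewrite pnatr_eq0.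
rewrite !cf_eq.
have -> : (if b then - (2^-1 * (z1 + z2)) else 2^-1 * (z1 + z2))
    = 2^-1 * (if b then - z1 else z1) + 2^-1 * (if b then - z2 else z2).
  by case: b; rewrite -mulrDr // -mulrN opprD.
set w1 := (if b then - z1 else z1); set w2 := (if b then - z2 else z2).
have key := @sp_mid R (2^-1 * w1) (2^-1 * w2).
rewrite !h2 in key.
rewrite -[X in X <= _](mulKf two0) mulr_natl.
by rewrite ler_wpM2l // invr_ge0 ler0n.
Qed.

Lemma proj_idem (R : realType) (m : nat) (S Pm : 'M[R]_m) :
  is_orth_proj S Pm -> forall u : 'rV[R]_m, u *m Pm *m Pm = u *m Pm.
Proof.
move=> H u.
set a := u *m Pm.
have [aS _] := H u.
have [aPS orth] := H a.
have vS : (a - a *m Pm <= S)%MS.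
  by apply: addmx_sub => //; rewrite eqmx_opp.
have h := orth _ vS.
apply/eqP; rewrite eq_sym -subr_eq0; apply/eqP.
move: (a - a *m Pm) vS h => v vS h.
apply/rowP => k; rewrite mxE.
have : (v *m v^T) ord0 ord0 = 0 by rewrite h mxE.
rewrite mxE => /eqP; rewrite psumr_eq0; last by move=> i _; rewrite !mxE -expr2 sqr_ge0.
move=> /allP /(_ k (mem_index_enum _)); rewrite mxE.
by rewrite mulf_eq0 orbb => /eqP.
Qed.

Lemma refl_vec (R : realType) (m : nat) (Pm : 'M[R]_m)
  (hP : forall u : 'rV[R]_m, u *m Pm *m Pm = u *m Pm) (u : 'rV[R]_m) :
  u *m (Pm - (1%:M - Pm)) *m (Pm - (1%:M - Pm)) = u.
Proof.
rewrite !mulmxBr !mulmx1 !mulmxBl hP.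
set p := u *m Pm.
by rewrite !subrr !subr0 addrAC subrr add0r opprK addrC subrK.
Qed.

Lemma relu_split (R : realType) (l : nat) (u : 'rV[R]_l) : relu u = relu (- u) + u.
Proof.
apply/rowP => k; rewrite !mxE.
move: (u 0 k) => z.
have [h|h] := leP 0 z.
  by rewrite max_r ?add0r // oppr_le0.
by rewrite max_l ?addNr // oppr_ge0 ltW.
Qed.

Lemma add_neg (A : Type) (V : zmodType) (F : A -> V) (add : A -> A -> A) (neg : A -> A) (z : A)
  (Hadd : forall a b, F (add a b) = F a + F b) (Hz : forall a, add a (neg a) = z)
  (Hzz : add z z = z) (a : A) : F (neg a) = - F a.
Proof.
have Fz : F z = 0.
  by apply/eqP; rewrite -(addrI (F z) (_ : F z + F z = F z + 0)) // addr0 -Hadd Hzz.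
by apply/eqP; rewrite -addr_eq0 addrC -Hadd Hz Fz.
Qed.

Lemma phi_neg (R : realType) (m l : nat) (phi : aggregation R m l)
  (H : lin_unbiased phi) n (G : rel 'I_n) (X : 'I_n -> 'rV[R]_m) (j : 'I_n) :
  phi n G (fun k => - X k) j = - phi n G X j.
Proof.
apply: (@add_neg _ _ (fun Y => phi n G Y j) (fun X1 X2 k => X1 k + X2 k)
   (fun X k => - X k) (fun _ => 0)).
- by move=> a b; exact: H.
- by move=> a; apply: funext => k; exact: subrr.
- by apply: funext => k; exact: addr0.
Qed.

Lemma half_double (R : realType) (q : R) : 2^-1 * (q + q) = q.
Proof. by rewrite mulrDr (mulrC 2^-1) -splitr. Qed.

Lemma y_split (R : realType) (m l : nat) (phi : aggregation R m l)
  (phi' : aggregation_R R l) (Hphi : lin_unbiased phi) (Hphi' : lin_unbiased_R phi')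
  (x : sample R m) :
  gcn2_lin phi phi' x = 2^-1 * (gcn2 phi phi' x + - gcn2 phi phi' (neg_sample x)).
Proof.
rewrite /gcn2_lin /gcn2 /neg_sample /=.
have e1 : (fun j => relu (phi (s_n x) (s_adj x) (fun k => - s_feat x k) j))
   = (fun j => relu (- phi (s_n x) (s_adj x) (s_feat x) j)).
  by apply: funext => j; rewrite phi_neg.
have e2 : (fun j => relu (phi (s_n x) (s_adj x) (s_feat x) j))
   = (fun j => relu (- phi (s_n x) (s_adj x) (s_feat x) j) + phi (s_n x) (s_adj x) (s_feat x) j).
  by apply: funext => j; rewrite -relu_split.
by rewrite e1 e2 Hphi' addrC addKr.
Qed.

Lemma proj_split (R : realType) (m l : nat) (Pm : 'M[R]_m) (phi : aggregation R m l)
  (phi' : aggregation_R R l) (Hphi : lin_unbiased phi) (Hphi' : lin_unbiased_R phi')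
  (x : sample R m) :
  gcn2_lin_proj Pm phi phi' x =
    2^-1 * (gcn2_lin phi phi' x + gcn2_lin phi phi' (refl_sample Pm x)).
Proof.
rewrite /gcn2_lin_proj /gcn2_lin /refl_sample /=.
rewrite -mulrDr -Hphi'.
have e : (fun j => phi (s_n x) (s_adj x) (s_feat x) j +
                phi (s_n x) (s_adj x) (fun j0 => s_feat x j0 *m (Pm - (1%:M - Pm))) j)
  = (fun j => phi (s_n x) (s_adj x) (fun j0 => s_feat x j0 *m Pm) j +
              phi (s_n x) (s_adj x) (fun j0 => s_feat x j0 *m Pm) j).
  apply: funext => j; rewrite -!Hphi; congr (phi _ _ _ j).
  apply: funext => k.
  by rewrite mulmxBr mulmxBr mulmx1 opprB addrA addrC addrA addrNK.
by rewrite e Hphi' half_double.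
Qed.

Theorem theorem2 (R : realType) (m l : nat)
  (G : set (set (sample R m))) (P : probability (g_sigma_algebraType G) R)
  (phi : aggregation R m l) (phi' : aggregation_R R l)
  (Hphi : lin_unbiased phi) (Hphi' : lin_unbiased_R phi') :
  (class_symmetric P ->
     finite_cost P (gcn2 phi phi') -> finite_cost P (gcn2_lin phi phi') ->
     (cost P (gcn2_lin phi phi') <= cost P (gcn2 phi phi'))%E) /\
  (forall S Pm : 'M[R]_m, is_orth_proj S Pm -> symmetric_about P Pm ->
     finite_cost P (gcn2_lin phi phi') ->
     finite_cost P (gcn2_lin_proj Pm phi phi') ->
     (cost P (gcn2_lin_proj Pm phi phi') <= cost P (gcn2_lin phi phi'))%E).
Proof.
have c0 : forall (y : sample R m -> R) x, (0 <= cost_fun y x)%E.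
  by move=> y x; rewrite /cost_fun lee_fin cf_ge0.
split.
  move=> Hcs Hy HL.
  apply: (@avg_bound R m G P (@neg_sample R m) _ Hcs _ _ Hy HL (c0 _) (c0 _)).
    by case=> n a i c X; rewrite /neg_sample /=; f_equal; apply: funext => j;
      rewrite ?negbK ?opprK.
  move=> x; rewrite /cost_fun -EFinD -EFinM lee_fin.
  rewrite (@y_split _ _ _ phi phi' Hphi Hphi' x).
  have h := @cf_neg R (cls_val x) (- gcn2 phi phi' (neg_sample x)).
  rewrite opprK in h.
  change (cls_val (neg_sample x)) with (~~ cls_val x).
  rewrite h; exact: cf_mid.
move=> S Pm HP Hsa HL HLS.
have hP := @proj_idem _ _ S Pm HP.
apply: (@avg_bound R m G P (refl_sample Pm) _ Hsa _ _ HL HLS (c0 _) (c0 _)).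
  by case=> n a i c X; rewrite /refl_sample /=; f_equal; apply: funext => j;
    rewrite (@refl_vec _ _ Pm hP).
move=> x; rewrite /cost_fun -EFinD -EFinM lee_fin.
rewrite (@proj_split _ _ _ Pm phi phi' Hphi Hphi' x).
change (cls_val (refl_sample Pm x)) with (cls_val x).
exact: cf_mid.
Qed.
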